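(* Let $\mathcal{X}$ be an input space with a probability distribution $p$, $\mathcal{Y}$ a finite label set, $\ell$ the 0-1 loss $\ell(y,y')=\mathbb{I}[y\neq y']$, and $L(F,F')=\mathbb{E}_{x\sim p}[\ell(F(x),F'(x))]$ for $F,F':\mathcal{X}\to\mathcal{Y}$. Let $\mathcal{B}$ be the set of all (measurable) functions $\mathcal{X}\to\mathcal{Y}$, $\mathcal{B}_+\subseteq\mathcal{B}$ the acceptable black boxes, $\mathcal{E}\subseteq\mathcal{B}$ the class of explanations and $\mathcal{E}_+\subseteq\mathcal{E}$ the acceptable explanations, and let $\epsilon_+\ge0$. Let $B\in\mathcal{B}$ with $\hat{\mathcal{O}}^*(B)=0$, i.e. $B\notin\mathcal{B}_+$. Let $E\in\mathcal{E}$ minimize $L(\cdot,B)$ over $\mathcal{E}$; let $B_+\in\mathcal{B}_+$ minimize $L(\cdot,B)$ over $\mathcal{B}_+$; let $E'\in\mathcal{E}$ minimize $L(\cdot,B_+)$ over $\mathcal{E}$; and let $E_+\in\mathcal{E}_+$ minimize $L(\cdot,B_+)$ over $\mathcal{E}_+$ (all these minimizers are assumed to exist). Define the restriction error $\epsilon_R=L(B_+,B)$ and the acceptable relative error $\epsilon_A=L(E_+,B_+)-L(E',B_+)\ge0$. If $L(E,B)+2\epsilon_R+\epsilon_A\le\epsilon_+$, then $E_+$ is potentially misleading for $B$, i.e. $\hat{\mathcal{O}}(E_+)\neq\hat{\mathcal{O}}^*(B)$.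
   Context: Acceptable black boxes/explanations are those in which all desired features appear and no prohibited features appear; here they are treated as given subsets $\mathcal{B}_+\subseteq\mathcal{B}$ and $\mathcal{E}_+\subseteq\mathcal{E}$. For a black box $B$ and fidelity threshold $\epsilon_+\ge0$, define $\hat{\mathcal{O}}(E)=\mathbb{I}[E\in\mathcal{E}_+\wedge L(E,B)\le\epsilon_+]$ (estimated user trust of $B$ given explanation $E$) and $\hat{\mathcal{O}}^*(B)=\mathbb{I}[B\in\mathcal{B}_+]$. An explanation $E$ of $B$ is potentially misleading if $\hat{\mathcal{O}}(E)\neq\hat{\mathcal{O}}^*(B)$. *)

(* Defs.v *)
From HB Require Import structures.
From mathcomp Require Import all_boot all_order all_algebra.
From mathcomp Require Import all_classical all_reals all_analysis.
Set Implicit Arguments. Unset Strict Implicit. Unset Printing Implicit Defensive.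
Import Order.TTheory GRing.Theory Num.Theory.
Local Open Scope classical_set_scope.
Local Open Scope ring_scope.

Definition loss01 (Y : eqType) (y y' : Y) : bool := y != y'.

(* A function X -> Y with Y finite is measurable iff all its fibres are measurable
   (Y carries the discrete sigma-algebra). *)
Definition meas_fun (d : measure_display) (X : measurableType d) (Y : finType)
  (F : X -> Y) : Prop := forall y : Y, measurable (F @^-1` [set y]).

Definition Bcal (d : measure_display) (X : measurableType d) (Y : finType)
  : set (X -> Y) := [set F | meas_fun F].

Definition Lerr (d : measure_display) (X : measurableType d) (R : realType)
  (P : probability X R) (Y : finType) (F F' : X -> Y) : \bar R :=
  (\int[P]_x ((loss01 (F x) (F' x))%:R : R)%:E)%E.

Definition Ohat (d : measure_display) (X : measurableType d) (R : realType)
  (P : probability X R) (Y : finType) (Eplus : set (X -> Y)) (epsp : R)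
  (B E : X -> Y) : bool :=
  `[< Eplus E >] && (Lerr P E B <= epsp%:E)%E.

Definition Ostar (X : Type) (Y : finType) (Bplus : set (X -> Y)) (B : X -> Y) : bool :=
  `[< Bplus B >].

Definition potentially_misleading (d : measure_display) (X : measurableType d)
  (R : realType) (P : probability X R) (Y : finType)
  (Bplus Eplus : set (X -> Y)) (epsp : R) (B E : X -> Y) : Prop :=
  Ohat P Eplus epsp B E != Ostar Bplus B.

Definition minimizer (d : measure_display) (X : measurableType d) (R : realType)
  (P : probability X R) (Y : finType) (S : set (X -> Y)) (T F : X -> Y) : Prop :=
  S F /\ forall G, S G -> (Lerr P F T <= Lerr P G T)%E.
Arguments Bcal {d} X Y.

(* Main.v *)
Require Import Defs.
From HB Require Import structures.
From mathcomp Require Import all_boot all_order all_algebra.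
From mathcomp Require Import all_classical all_reals all_analysis.
From mathcomp Require Import lra.
Import Order.TTheory GRing.Theory Num.Theory.
Local Open Scope classical_set_scope.
Local Open Scope ring_scope.

Section S.
Context (d : measure_display) (X : measurableType d) (R : realType)
  (P : probability X R) (Y : finType).

Definition Dset (F G : X -> Y) := [set x | F x != G x].

Lemma Dset_meas F G : meas_fun F -> meas_fun G -> measurable (Dset F G).
Proof.
move=> mF mG.
have -> : Dset F G = \big[setU/set0]_(y <- enum Y) (F @^-1` [set y] `&` ~` (G @^-1` [set y])).
  apply/seteqP; split => x /=.
  - move=> Hx; rewrite -bigcup_seq; exists (F x); first by rewrite /= mem_enum.
    by split => //=; apply/eqP; rewrite eq_sym.
  - rewrite -bigcup_seq => -[y _ [/= Fy /eqP]]; by rewrite /Dset /= Fy eq_sym.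
apply: bigsetU_measurable => y _; apply: measurableI => //.
exact: measurableC.
Qed.

Lemma Lerr_eq F G : meas_fun F -> meas_fun G -> Lerr P F G = P (Dset F G).
Proof.
move=> mF mG; rewrite /Lerr.
have -> : (fun x => ((loss01 (F x) (G x))%:R : R)%:E) = fun x => (\1_(Dset F G) x)%:E.
  apply: funext => x; rewrite indicE /loss01.
  have -> : (x \in Dset F G) = (F x != G x).
    by apply/idP/idP => [|H]; [rewrite inE|apply/mem_set].
  by [].
by rewrite integral_indic // ?setIT //; apply: Dset_meas.
Qed.


Lemma Lerr_fin (F G : X -> Y) : meas_fun F -> meas_fun G -> Lerr P F G \is a fin_num.
Proof. by move=> mF mG; rewrite Lerr_eq //; apply: fin_num_measure; apply: Dset_meas. Qed.

Lemma Lerr_sym (F G : X -> Y) : Lerr P F G = Lerr P G F.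
Proof.
rewrite /Lerr /loss01; congr (integral _ _ _); apply: funext => x.
by rewrite eq_sym.
Qed.

Lemma Lerr_tri (F G H : X -> Y) : meas_fun F -> meas_fun G -> meas_fun H ->
  (Lerr P F H <= Lerr P F G + Lerr P G H)%E.
Proof.
move=> mF mG mH; rewrite !Lerr_eq //.
apply: (le_trans (y := P (Dset F G `|` Dset G H))).
  apply: le_measure; rewrite ?inE; try apply: measurableU; try apply: Dset_meas => //.
  move=> x /=; rewrite /Dset /= => Hx.
  case: (eqVneq (F x) (G x)) => [e|]; last by left.
  by right; rewrite -e.
by apply: measureU2; apply: Dset_meas.
Qed.

End S.
Theorem theorem2 (d : measure_display) (X : measurableType d) (R : realType)
  (P : probability X R) (Y : finType)
  (Bplus Ecal Eplus : set (X -> Y)) (epsp : R)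
  (B E Bp E' Ep : X -> Y) :
  Bplus `<=` Bcal X Y -> Ecal `<=` Bcal X Y -> Eplus `<=` Ecal ->
  0 <= epsp ->
  Bcal X Y B ->
  Ostar Bplus B = false ->
  minimizer P Ecal B E ->
  minimizer P Bplus B Bp ->
  minimizer P Ecal Bp E' ->
  minimizer P Eplus Bp Ep ->
  let epsR := Lerr P Bp B in
  let epsA := (Lerr P Ep Bp - Lerr P E' Bp)%E in
  (Lerr P E B + epsR *+ 2 + epsA <= epsp%:E)%E ->
  potentially_misleading P Bplus Eplus epsp B Ep.
Proof.
move=> sB sE sEp ep0 mB Ob [EE mE] [BpB mBp] [E'E mE'] [EpE mEp] epsR epsA H.
rewrite /potentially_misleading Ob /Ohat /=.
have mBp' : meas_fun Bp by apply: sB.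
have mE0 : meas_fun E by apply: sE.
have mE'0 : meas_fun E' by apply: sE.
have mEp0 : meas_fun Ep by apply: sE; apply: sEp.
have mB0 : meas_fun B by [].
rewrite eqbF_neg negbK; apply/andP; split; first by apply/asboolP.
have t1 := @Lerr_tri _ _ _ P _ _ _ _ mEp0 mBp' mB0.
have t2 := mE' E EE.
have t3 := @Lerr_tri _ _ _ P _ _ _ _ mE0 mB0 mBp'.
have s1 := @Lerr_sym _ _ _ P _ B Bp.
move: H t1 t2 t3; rewrite /epsA /epsR s1.
rewrite -(fineK (@Lerr_fin _ _ _ P _ _ _ mEp0 mB0)) -(fineK (@Lerr_fin _ _ _ P _ _ _ mEp0 mBp')) -(fineK (@Lerr_fin _ _ _ P _ _ _ mBp' mB0)).
rewrite -(fineK (@Lerr_fin _ _ _ P _ _ _ mE'0 mBp')) -(fineK (@Lerr_fin _ _ _ P _ _ _ mE0 mBp')) -(fineK (@Lerr_fin _ _ _ P _ _ _ mE0 mB0)).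
rewrite -EFin_natmul -EFinN -!EFinD !lee_fin.
move: (fine _) (fine _) (fine _) (fine _) (fine _) (fine _) => a b c e f g.
rewrite mulr2n => h1 h2 h3 h4; clear -h1 h2 h3 h4; lra.
Qed.
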